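(* Let $0<\mu\leq L$ and $c\geq 0$, and let $I=\left(0, \tfrac{2\mu}{\mu L+c^2}\right)$. Define $u:I\to\mathbb{R}$ by $$ u(t)=\tfrac{1}{2}\left(L^2+\mu^2+2c^2\right)t^2-(L+\mu)t +\tfrac{1}{2}(L-\mu)t\sqrt{(Lt + \mu t - 2)^2 + 4c^2t^2}. $$ Then $u$ is convex on $I$ and $u(I)\subseteq [-1, 0)$. *)

(* Defs.v *)
From Stdlib Require Import Reals.
Open Scope R_scope.

(* We require
   I to be an interval in the statement, so all convex combinations lie in I;
   we still restrict to points of I for generality. *)
Definition convex_on (I : R -> Prop) (f : R -> R) : Prop :=
  forall x y lam, I x -> I y -> 0 <= lam <= 1 ->
    f (lam * x + (1 - lam) * y) <= lam * f x + (1 - lam) * f y.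

Definition u_fun (mu L c : R) (t : R) : R :=
  / 2 * (L ^ 2 + mu ^ 2 + 2 * c ^ 2) * t ^ 2 - (L + mu) * t
  + / 2 * (L - mu) * t * sqrt ((L * t + mu * t - 2) ^ 2 + 4 * c ^ 2 * t ^ 2).

Definition I_int (mu L c : R) (t : R) : Prop :=
  0 < t < 2 * mu / (mu * L + c ^ 2).

(* Main.v *)
Require Import Defs.
From Stdlib Require Import Reals Lra Psatz.
Open Scope R_scope.

Lemma sqrt_le_of (X Y : R) : 0 <= Y -> X <= Y ^ 2 -> sqrt X <= Y.
Proof.
  intros hY hX.
  rewrite <- (sqrt_pow2 Y hY). apply sqrt_le_1_alt. exact hX.
Qed.

Definition N2 (x y : R) := sqrt (x ^ 2 + y ^ 2).

Lemma N2_ge0 x y : 0 <= N2 x y.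
Proof. apply sqrt_pos. Qed.

Lemma N2_sq x y : N2 x y ^ 2 = x ^ 2 + y ^ 2.
Proof. unfold N2. apply pow2_sqrt. nra. Qed.

Lemma N2_tri a b c d : N2 (a + b) (c + d) <= N2 a c + N2 b d.
Proof.
  unfold N2 at 1. apply sqrt_le_of.
  - generalize (N2_ge0 a c) (N2_ge0 b d); lra.
  - generalize (N2_ge0 a c) (N2_ge0 b d) (N2_sq a c) (N2_sq b d).
    intros h1 h2 h3 h4.
    set (A := N2 a c) in *. set (B := N2 b d) in *.
    assert (a * b + c * d <= A * B).
    { assert ((a*b+c*d)^2 <= (A*B)^2).
      { replace ((A*B)^2) with (A^2*B^2) by ring. rewrite h3, h4. assert (0 <= (a*d-b*c)^2) by apply pow2_ge_0. assert ((a ^ 2 + c ^ 2) * (b ^ 2 + d ^ 2) - (a*b+c*d)^2 = (a*d-b*c)^2) by ring. lra. }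
      assert (0 <= A*B) by nra. nra. }
    nra.
Qed.

Lemma N2_scale l x y : 0 <= l -> N2 (l * x) (l * y) = l * N2 x y.
Proof.
  intros hl. unfold N2.
  replace ((l*x)^2 + (l*y)^2) with ((l*l) * (x^2+y^2)) by ring.
  rewrite sqrt_mult_alt by nra. rewrite sqrt_square by lra. reflexivity.
Qed.

Lemma N2_bound x y k : 0 <= k -> x ^ 2 + y ^ 2 <= k ^ 2 -> N2 x y <= k.
Proof. intros; unfold N2; apply sqrt_le_of; auto. Qed.

Section S.
Variables mu L c : R.
Definition pp t := - (L - mu) * t * (2 - (L + mu) * t) / 2.
Definition qq t := c * (L - mu) * t ^ 2.
Definition al t := / 2 * (L ^ 2 + mu ^ 2 + 2 * c ^ 2) * t ^ 2 - (L + mu) * t.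

Lemma u_eq t : 0 <= t -> mu <= L -> u_fun mu L c t = al t + N2 (pp t) (qq t).
Proof.
  intros ht hm. unfold u_fun, al, N2, pp, qq.
  replace ((- (L - mu) * t * (2 - (L + mu) * t) / 2) ^ 2 + (c * (L - mu) * t ^ 2) ^ 2)
    with ((/2 * (L - mu) * t) * (/2 * (L - mu) * t) *
          ((L * t + mu * t - 2) ^ 2 + 4 * c ^ 2 * t ^ 2)) by field.
  rewrite sqrt_mult_alt by (apply Rle_0_sqr). assert (0 <= /2 * (L - mu) * t) by (apply Rmult_le_pos; [apply Rmult_le_pos; lra| lra]). rewrite sqrt_square by lra. ring.
Qed.
End S.

Theorem lemma2p1 (mu L c : R) (hmu : 0 < mu) (hmuL : mu <= L) (hc : 0 <= c) :
  convex_on (I_int mu L c) (u_fun mu L c) /\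
  (forall t, I_int mu L c t -> -1 <= u_fun mu L c t < 0).
Proof.
  split.
  - intros x y l [hx _] [hy _] hl.
    set (t := l * x + (1 - l) * y).
    assert (ht : 0 <= t) by (unfold t; nra).
    rewrite !u_eq by lra.
    set (k := / 2 * (L ^ 2 + mu ^ 2 + 2 * c ^ 2)).
    set (d := l * (1 - l) * (x - y) ^ 2).
    assert (hd : 0 <= d) by (unfold d; apply Rmult_le_pos; [apply Rmult_le_pos; lra | apply pow2_ge_0]).
    assert (ep : pp mu L t = (l * pp mu L x + (1 - l) * pp mu L y) + d * (-((L+mu)*(L-mu)/2)))
      by (unfold pp, t, d; field).
    assert (eq : qq mu L c t = (l * qq mu L c x + (1 - l) * qq mu L c y) + d * (- (c * (L - mu))))
      by (unfold qq, t, d; ring).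
    assert (ea : al mu L c t = l * al mu L c x + (1 - l) * al mu L c y - k * d)
      by (unfold al, t, d, k; field).
    rewrite ep, eq, ea.
    set (px := pp mu L x). set (py := pp mu L y). set (qx := qq mu L c x). set (qy := qq mu L c y).
    set (e1 := - ((L + mu) * (L - mu) / 2)). set (e2 := - (c * (L - mu))).
    assert (H1 := N2_tri (l*px+(1-l)*py) (d*e1) (l*qx+(1-l)*qy) (d*e2)).
    assert (H2 := N2_tri (l*px) ((1-l)*py) (l*qx) ((1-l)*qy)).
    rewrite (N2_scale d) in H1 by lra.
    rewrite (N2_scale l) in H2 by lra.
    rewrite (N2_scale (1-l)) in H2 by lra.
    assert (H3 : N2 e1 e2 <= k).
    { apply N2_bound. unfold k; nra. assert (k ^ 2 - (e1 ^ 2 + e2 ^ 2) = (L*mu + c^2)^2) by (unfold k, e1, e2; field). assert (0 <= (L*mu+c^2)^2) by apply pow2_ge_0. lra. }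
    assert (d * N2 e1 e2 <= d * k) by (apply Rmult_le_compat_l; lra).
    lra.
  - intros t [ht0 ht1].
    set (m := mu * L + c ^ 2).
    assert (hm : 0 < m) by (unfold m; nra).
    assert (htm : t * m < 2 * mu).
    { apply (Rmult_lt_compat_r m) in ht1; auto.
      unfold Rdiv in ht1. rewrite Rmult_assoc, Rinv_l in ht1 by lra. lra. }
    rewrite u_eq by lra.
    set (M11 := (1 - t * L) ^ 2 + t ^ 2 * c ^ 2).
    set (M22 := (1 - t * mu) ^ 2 + t ^ 2 * c ^ 2).
    set (M12 := c * (L - mu) * t ^ 2).
    assert (ea : al mu L c t = (M11 + M22) / 2 - 1) by (unfold al, M11, M22; field).
    assert (ep : pp mu L t ^ 2 + qq mu L c t ^ 2 = ((M11 - M22) / 2) ^ 2 + M12 ^ 2)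
      by (unfold pp, qq, M11, M22, M12; field).
    rewrite ea.
    assert (hN := N2_ge0 (pp mu L t) (qq mu L c t)).
    assert (hM : 0 <= M11 + M22) by (unfold M11, M22; generalize (pow2_ge_0 (1 - t*L)) (pow2_ge_0 (1 - t*mu)) (pow2_ge_0 t) (pow2_ge_0 c); intros; assert (0 <= t^2*c^2) by (apply Rmult_le_pos; lra); lra).
    split. lra.
    assert (hdet : (1 - M11) * (1 - M22) - M12 ^ 2 = t^2 * ((m*t - 2*mu) * (m*t - 2*L)))
      by (unfold M11, M22, M12, m; ring).
    assert (hdp : 0 < (1 - M11) * (1 - M22) - M12 ^ 2).
    { rewrite hdet. apply Rmult_lt_0_compat. apply pow_lt; lra.
      assert (m * t < 2 * L) by (rewrite Rmult_comm; lra).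
      assert (0 < 2*mu - m*t) by lra. assert (0 < 2*L - m*t) by lra.
      replace ((m * t - 2 * mu) * (m * t - 2 * L)) with ((2*mu - m*t) * (2*L - m*t)) by ring.
      apply Rmult_lt_0_compat; lra. }
    assert (h22 : 0 < 1 - M22).
    { assert (t * (mu^2 + c^2) < 2 * mu).
      { assert (t * (mu^2+c^2) <= t * m).
        { apply Rmult_le_compat_l; [lra|]. unfold m.
          assert (mu*mu <= mu*L) by (apply Rmult_le_compat_l; lra). lra. }
        lra. }
      assert (1 - M22 = t * (2*mu - t*(mu^2+c^2))) by (unfold M22; ring).
      assert (0 < t * (2*mu - t*(mu^2+c^2))) by (apply Rmult_lt_0_compat; lra).
      lra. }
    assert (h11 : 0 < 1 - M11).
    { destruct (Rlt_le_dec 0 (1 - M11)) as [|h]; auto.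
      assert ((1 - M11) * (1 - M22) <= 0).
      { replace 0 with (0 * (1 - M22)) by ring. apply Rmult_le_compat_r; lra. }
      generalize (pow2_ge_0 M12). lra. }
    set (beta := 1 - (M11 + M22) / 2).
    assert (N2 (pp mu L t) (qq mu L c t) < beta).
    { assert (hsq := N2_sq (pp mu L t) (qq mu L c t)). rewrite ep in hsq.
      assert (N2 (pp mu L t) (qq mu L c t) ^ 2 < beta ^ 2) by (unfold beta; nra).
      assert (0 < beta) by (unfold beta; lra). nra. }
    unfold beta in *. lra.
Qed.
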